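(* For all $m,n\ge 1$ one has $K_{m,n}(x,y)=K_{m,n}(y,x)$.
   Context: Let $m,n\ge 1$. $K_{m,n}$ is the complete bipartite graph with vertex set $V=A_m\sqcup B_n$, $A_m=\{a_1,\dots,a_m\}$, $B_n=\{b_1,\dots,b_n\}$, with exactly one edge $\{a_i,b_j\}$ for every $i,j$; $a_m$ is the sink. A configuration is a function $u:V\to\mathbb Z$; $\mathrm{degree}(u)=\sum_c u_c$. For $c\in V$ with graph degree $d_c$, $\Delta^{(c)}=d_c e_c-\sum_{c'\text{ adjacent to }c}e_{c'}$ ($e_c$ the indicator of $c$), $\Delta^{(C)}=\sum_{c\in C}\Delta^{(c)}$. Toppling equivalence: difference in the integer span of the $\Delta^{(c)}$; effective: toppling equivalent to a non-negative configuration; $\mathrm{rank}(u)=-1+\min\{\mathrm{degree}(f): f\ge0,\ u-f\text{ not effective}\}$. $u$ is parking if $u_c\ge0$ for $c\ne a_m$ and for every non-empty $C\subseteq V\setminus\{a_m\}$, $u-\Delta^{(C)}$ has a negative value at a vertex other than $a_m$; sorted if $u_{a_1}\le\dots\le u_{a_{m-1}}$ and $u_{b_1}\le\dots\le u_{b_n}$ (no condition at the sink). For a parking sorted $u$ set $\mathrm{xpara}(u)=(m-1)(n-1)+\mathrm{rank}(u)-\mathrm{degree}(u)$ and $\mathrm{ypara}(u)=\mathrm{rank}(u)+1$ (both are non-negative integers). Define the formal power series $K_{m,n}(x,y)=\sum_u x^{\mathrm{xpara}(u)}y^{\mathrm{ypara}(u)}$, the sum over all parking sorted configurations $u$ on $K_{m,n}$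 (all sink values allowed); equivalently $K_{m,n}(x,y)=x^{(m-1)(n-1)}y\,\widetilde K_{m,n}(x^{-1},xy)$ where $\widetilde K_{m,n}(d,r)=\sum_u d^{\mathrm{degree}(u)}r^{\mathrm{rank}(u)}$. *)

(* Defs.v *)
From HB Require Import structures.
From mathcomp Require Import all_boot all_order all_algebra.
Set Implicit Arguments. Unset Strict Implicit. Unset Printing Implicit Defensive.
Import Order.TTheory GRing.Theory Num.Theory.
Local Open Scope ring_scope.

(* Vertices of K_{m,n}: inl i = a_{i+1} (i : 'I_m), inr j = b_{j+1} (j : 'I_n). *)
Definition vert (m n : nat) : finType := ('I_m + 'I_n)%type.

(* The sink a_m, i.e. inl i with i = m-1 (0-indexed). *)
Definition is_sink (m n : nat) (c : vert m n) : bool :=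
  match c with inl i => (nat_of_ord i == m.-1)%N | inr _ => false end.

Definition config (m n : nat) := vert m n -> int.

Definition adj (m n : nat) (c c' : vert m n) : bool :=
  match c, c' with
  | inl _, inr _ => true
  | inr _, inl _ => true
  | _, _ => false
  end.

Definition gdeg (m n : nat) (c : vert m n) : int :=
  (#|[pred c' | adj c c']|)%:Z.

Definition degree (m n : nat) (u : config m n) : int := \sum_(c : vert m n) u c.

Definition Delta (m n : nat) (c : vert m n) : config m n :=
  fun c' => (if c' == c then gdeg c else 0) - (if adj c c' then 1 else 0).

Definition DeltaSet (m n : nat) (C : {set vert m n}) : config m n :=
  fun c' => \sum_(c in C) Delta c c'.

Definition topp_equiv (m n : nat) (u v : config m n) : Prop :=
  exists z : vert m n -> int,
    forall c', u c' - v c' = \sum_(c : vert m n) z c * Delta c c'.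

Definition nonneg (m n : nat) (f : config m n) : Prop := forall c, 0 <= f c.

Definition effective (m n : nat) (u : config m n) : Prop :=
  exists w : config m n, nonneg w /\ topp_equiv u w.

(* has_rank u r  <->  r = -1 + min{degree f : f >= 0, u - f not effective}. *)
Definition has_rank (m n : nat) (u : config m n) (r : int) : Prop :=
  (exists f : config m n,
      nonneg f /\ degree f = r + 1 /\ ~ effective (fun c => u c - f c)) /\
  (forall f : config m n,
      nonneg f -> degree f < r + 1 -> effective (fun c => u c - f c)).

Definition parking (m n : nat) (u : config m n) : Prop :=
  (forall c, ~~ is_sink c -> 0 <= u c) /\
  (forall C : {set vert m n}, C != set0 -> (forall c, c \in C -> ~~ is_sink c) ->
     exists c, ~~ is_sink c /\ u c - DeltaSet C c < 0).

Definition sorted_conf (m n : nat) (u : config m n) : Prop :=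
  (forall i i' : 'I_m, (i <= i')%N -> (i' < m.-1)%N -> u (inl i) <= u (inl i')) /\
  (forall j j' : 'I_n, (j <= j')%N -> u (inr j) <= u (inr j')).

(* u is a parking sorted configuration with xpara(u) = x and ypara(u) = y. *)
Definition parking_sorted_with (m n : nat) (x y : int) (u : config m n) : Prop :=
  parking u /\ sorted_conf u /\
  exists r : int, has_rank u r /\
    x = ((m.-1 * n.-1)%N)%:Z + r - degree u /\ y = r + 1.

(* Main.v *)
Require Import Defs.
From HB Require Import structures.
From mathcomp Require Import all_boot all_order all_algebra all_fingroup.
From mathcomp Require Import ring lra zify.
From Stdlib Require Import ClassicalEpsilon FunctionalExtensionality ProofIrrelevance Classical.
Set Implicit Arguments. Unset Strict Implicit. Unset Printing Implicit Defensive.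
Import Order.TTheory GRing.Theory Num.Theory.
Local Open Scope ring_scope.

Lemma ex_maxPs (T : finType) (P : pred T) (F : T -> int) x0 :
  P x0 -> exists2 x, P x & forall y, P y -> F y <= F x.
Proof.
move=> Px0; case: (arg_maxP F Px0) => x Px H; exists x => // y Py; exact: H.
Qed.

Section Sorting.
Variables (N L : nat).

Definition okp (a : {perm 'I_N}) := forall i : 'I_N, (a i < L)%N = (i < L)%N.
Definition srt (x : 'I_N -> int) := forall i i' : 'I_N, (i <= i')%N -> (i' < L)%N -> x i <= x i'.

Definition score (x : 'I_N -> int) (a : {perm 'I_N}) :=
  \sum_(k : 'I_N | (k < L)%N) (k : nat)%:Z * x (a k).

Lemma srt_ex (x : 'I_N -> int) : exists a, okp a /\ srt (fun i => x (a i)).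
Proof.
have P1 : [forall i : 'I_N, ((1%g : {perm 'I_N}) i < L)%N == (i < L)%N].
  by apply/forallP => i; rewrite perm1.
have [a Pa Ha] := @ex_maxPs _ [pred a : {perm 'I_N} | [forall i, (a i < L)%N == (i < L)%N]] (score x) _ P1.
have oka : okp a by move=> i; move/forallP: Pa => /(_ i) /eqP.
exists a; split => // i i' Hii' HiL.
rewrite leNgt; apply/negP => Hlt.
have Hne : i != i' by apply: contraTneq Hlt => ->; rewrite ltxx.
have Hi : (i < L)%N by apply: leq_ltn_trans Hii' HiL.
set b := (tperm i i' * a)%g.
have bE : forall k, b k = a (tperm i i' k) by move=> k; rewrite permM.
have Pb : [forall k, (b k < L)%N == (k < L)%N].
  apply/forallP => k; rewrite bE oka; case: tpermP => [->|->|] //; by rewrite ?Hi ?HiL.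
have split2 : forall F : 'I_N -> int, \sum_(k : 'I_N | (k < L)%N) F k =
    F i + (F i' + \sum_(k : 'I_N | ((k < L)%N && (k != i)) && (k != i')) F k).
  move=> F; rewrite (bigD1 i) //=; congr (_ + _).
  by rewrite (bigD1 i') //= HiL eq_sym Hne.
have := Ha b Pb; rewrite /score !split2.
rewrite !bE tpermL tpermR.
rewrite (eq_bigr (fun k : 'I_N => (k : nat)%:Z * x (a k))); last first.
  by move=> k /andP [/andP [_ k1] k2]; rewrite bE tpermD // eq_sym.
set R := \sum_(k | _) _.
have Hii : (i < i')%N by rewrite ltn_neqAle Hne Hii'.
have : 0 < ((i' : nat)%:Z - (i : nat)%:Z) * (x (a i) - x (a i')).
  by apply: mulr_gt0; [rewrite subr_gt0 ltz_nat | rewrite subr_gt0].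
move=> Hpos.
have E : (i : nat)%:Z * x (a i') + ((i' : nat)%:Z * x (a i) + R) -
         ((i : nat)%:Z * x (a i) + ((i' : nat)%:Z * x (a i') + R)) =
         ((i' : nat)%:Z - (i : nat)%:Z) * (x (a i) - x (a i')) by ring.
lia.
Qed.

Definition dc (A : {set 'I_N}) := forall k k' : 'I_N, k \in A -> (k' <= k)%N -> k' \in A.

Lemma dc_eq (A B : {set 'I_N}) : dc A -> dc B -> #|A| = #|B| -> A = B.
Proof.
move=> dA dB HAB.
have sAB : A \subset B.
  apply/subsetP => a aA; apply: contraT => aB.
  have sBA : B \proper A.
    apply/properP; split; last by exists a.
    apply/subsetP => b bB; apply: contraT => bA.
    have h1 : (b < a)%N by rewrite ltnNge; apply: contra aB => h; exact: dB bB h.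
    have h2 : (a < b)%N by rewrite ltnNge; apply: contra bA => h; exact: dA aA h.
    by have := ltn_trans h1 h2; rewrite ltnn.
  by have := proper_card sBA; rewrite HAB ltnn.
by apply/eqP; rewrite eqEcard sAB HAB leqnn.
Qed.

Lemma srt_uniq (x : 'I_N -> int) (a : {perm 'I_N}) : okp a -> srt x ->
  srt (fun i => x (a i)) -> forall i : 'I_N, (i < L)%N -> x (a i) = x i.
Proof.
move=> oka sx sxa.
have key : forall (t : int) (k : 'I_N), (k < L)%N -> (x k <= t) = (x (a k) <= t).
  move=> t k kL.
  set A := [set k0 : 'I_N | (k0 < L)%N && (x k0 <= t)].
  set B := [set k0 : 'I_N | (k0 < L)%N && (x (a k0) <= t)].
  have BA : B = (a @^-1: A).
    by apply/setP => k0; rewrite !inE oka.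
  have dA : dc A.
    move=> k1 k2; rewrite !inE => /andP [k1L xk] h; apply/andP; split.
      exact: leq_ltn_trans h k1L.
    exact: le_trans (sx _ _ h k1L) xk.
  have dB : dc B.
    move=> k1 k2; rewrite !inE => /andP [k1L xk] h; apply/andP; split.
      exact: leq_ltn_trans h k1L.
    exact: le_trans (sxa _ _ h k1L) xk.
  have cAB : #|A| = #|B| by rewrite BA card_preimset //; exact: perm_inj.
  have := dc_eq dA dB cAB => /setP /(_ k); rewrite !inE kL /=.
  by [].
move=> i iL; apply/eqP; rewrite eq_le.
by rewrite -key // lexx /= key // lexx.
Qed.

End Sorting.

Lemma ex_maxP (T : finType) (P : pred T) (F : T -> int) x0 :
  P x0 -> exists2 x, P x & forall y, P y -> F y <= F x.
Proof.
move=> Px0; case: (arg_maxP F Px0) => x Px H; exists x => // y Py; exact: H.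
Qed.

Lemma ex_minP (T : finType) (P : pred T) (F : T -> int) x0 :
  P x0 -> exists2 x, P x & forall y, P y -> F x <= F y.
Proof.
move=> Px0; case: (arg_minP F Px0) => x Px H; exists x => // y Py; exact: H.
Qed.

Section Basics.
Variables m n : nat.
Local Notation V := (vert m n).
Local Notation cfg := (config m n).

Lemma adjC (c c' : V) : adj c c' = adj c' c.
Proof. by case: c; case: c'. Qed.

Lemma adj_irr (c : V) : adj c c = false.
Proof. by case: c. Qed.

Definition Lap (z : V -> int) : cfg := fun c' => \sum_(c : V) z c * Delta c c'.

Lemma gdegE (c : V) : gdeg c = \sum_(w : V) (if adj c w then 1 else 0).
Proof.
rewrite /gdeg -big_mkcond /= sumr_const natz.
by [].
Qed.

Lemma LapE (z : V -> int) c' :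
  Lap z c' = \sum_(c : V) (if adj c' c then z c' - z c else 0).
Proof.
rewrite /Lap /Delta.
under eq_bigr => c _ do rewrite mulrBr.
rewrite sumrB.
rewrite (bigD1 c') //= eqxx big1 => [|c]; last by rewrite eq_sym => /negbTE ->; rewrite mulr0.
rewrite addr0.
have -> : \sum_c z c * (if adj c c' then 1 else 0) = \sum_c (if adj c' c then z c else 0).
  by apply: eq_bigr => c _; rewrite adjC; case: ifP; rewrite ?mulr1 ?mulr0.
have -> : \sum_c (if adj c' c then z c' - z c else 0) =
   \sum_c (if adj c' c then z c' else 0) - \sum_c (if adj c' c then z c else 0).
  by rewrite -sumrB; apply: eq_bigr => c _; case: ifP; rewrite ?subr0.
congr (_ - _); rewrite gdegE mulr_sumr; apply: eq_bigr => c _.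
by case: ifP; rewrite ?mulr1 ?mulr0.
Qed.

Lemma deg_Lap z : degree (Lap z) = 0.
Proof.
rewrite /degree /Lap exchange_big /= big1 // => c _.
rewrite -mulr_sumr /Delta sumrB (bigD1 c) //= eqxx big1 ?addr0 => [|c' /negbTE ->] //.
by rewrite gdegE subrr mulr0.
Qed.

Lemma Lap_add z1 z2 c : Lap (fun v => z1 v + z2 v) c = Lap z1 c + Lap z2 c.
Proof. by rewrite /Lap -big_split; apply: eq_bigr => ? _; rewrite mulrDl. Qed.

Lemma Lap_opp z c : Lap (fun v => - z v) c = - Lap z c.
Proof. by rewrite /Lap -sumrN; apply: eq_bigr => ? _; rewrite mulNr. Qed.

Lemma Lap_shift z k c : Lap (fun v => z v - k) c = Lap z c.
Proof.
rewrite !LapE; apply: eq_bigr => ? _; case: ifP => //; rewrite opprB addrA subrK.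
by [].
Qed.


Implicit Types u v : cfg.
Hypothesis hm : (0 < m)%N.
Lemma sinkP : (m.-1 < m)%N. Proof. by rewrite ltn_predL. Qed.
Definition q0 : V := inl (Ordinal sinkP).
Lemma is_sinkE c : is_sink c = (c == q0).
Proof. by case: c => [i|j] //=; apply/eqP/eqP => [H|[]//]; congr inl; apply: val_inj. Qed.


Lemma sum_ind (P : pred V) : \sum_(c : V) (if P c then 1 else 0) = (#|P|)%:Z :> int.
Proof. by rewrite -big_mkcond /= sumr_const natz. Qed.

Lemma te_refl u : topp_equiv u u.
Proof. by exists (fun _ => 0) => c; rewrite subrr big1 // => ? _; rewrite mul0r. Qed.

Lemma te_sym u v : topp_equiv u v -> topp_equiv v u.
Proof.
case=> z Hz; exists (fun c => - z c) => c'; have := Lap_opp z c'; rewrite /Lap => ->.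
by rewrite -Hz opprB.
Qed.

Lemma te_trans u v (w : cfg) : topp_equiv u v -> topp_equiv v w -> topp_equiv u w.
Proof.
case=> z1 H1 [z2 H2]; exists (fun c => z1 c + z2 c) => c'.
have := Lap_add z1 z2 c'; rewrite /Lap => ->.
by rewrite -H1 -H2 addrA subrK.
Qed.

Lemma te_deg u v : topp_equiv u v -> degree u = degree v.
Proof.
case=> z Hz; apply/eqP; rewrite -subr_eq0; rewrite /degree -sumrB.
have -> : \sum_c (u c - v c) = degree (Lap z) by apply: eq_bigr => c _; rewrite Hz.
by rewrite deg_Lap.
Qed.

Lemma te_subf u v (f : cfg) : topp_equiv u v ->
  topp_equiv (fun c => u c - f c) (fun c => v c - f c).
Proof. by case=> z Hz; exists z => c; rewrite -Hz opprB addrA subrK. Qed.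

Lemma te_addf u v (f : cfg) : topp_equiv u v ->
  topp_equiv (fun c => u c + f c) (fun c => v c + f c).
Proof. by case=> z Hz; exists z => c; rewrite -Hz opprD addrACA subrr addr0. Qed.

Lemma eff_te u v : topp_equiv u v -> effective u -> effective v.
Proof.
move=> Huv [w [Hw Huw]]; exists w; split => //.
exact: te_trans (te_sym Huv) Huw.
Qed.

Lemma eff_ext (u v : cfg) : (forall c, u c = v c) -> effective u -> effective v.
Proof. by move=> H; have -> : u = v by apply: functional_extensionality. Qed.

Definition Kc : cfg := fun x => gdeg x - 2.

Lemma te_Kc u v : topp_equiv u v -> topp_equiv (fun c => Kc c - u c) (fun c => Kc c - v c).
Proof. by case=> z Hz; exists (fun c => - z c) => c; have := Lap_opp z c; rewrite /Lap => ->; rewrite -Hz; ring. Qed.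

Definition nu (pi : V -> int) : cfg :=
  fun x => (#|[pred y | adj x y && (pi y < pi x)]|)%:Z - 1.

Lemma nu_noneff pi : ~ effective (nu pi).
Proof.
case=> w [Hw [z Hz]].
have [vm _ Hvm] := @ex_maxP V predT z q0 isT.
have [s Ss Hs] := @ex_minP V [pred v | z v == z vm] pi vm (eqxx _).
have Ls : (#|[pred c | adj s c && (pi c < pi s)]|)%:Z <= Lap z s.
  rewrite -sum_ind LapE; apply: ler_sum => c _ /=.
  case Hsc: (adj s c) => //=.
  have zc : z c <= z s by rewrite (eqP Ss); exact: Hvm.
  case: (boolP (pi c < pi s)) => Hp /=.
  - have : z c != z vm.
      apply/negP => Hc; have := Hs c Hc; rewrite leNgt Hp //.
    rewrite -(eqP Ss) => Hne; lia.
  - lia.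
have := Hz s; rewrite -/(Lap z s) /nu => E.
have := Hw s; lia.
Qed.


Lemma sumV (F : V -> int) : \sum_(c : V) F c = \sum_(i : 'I_m) F (inl i) + \sum_(j : 'I_n) F (inr j).
Proof. exact: big_sumType. Qed.

Lemma gdeg_l i : gdeg (inl i : V) = n%:Z.
Proof.
rewrite gdegE sumV /= big1 // add0r sumr_const card_ord; exact: natz.
Qed.

Lemma gdeg_r j : gdeg (inr j : V) = m%:Z.
Proof.
rewrite gdegE sumV /= [X in _ + X]big1 // addr0 sumr_const card_ord; exact: natz.
Qed.

Lemma Pmuln (a b : nat) : (a%:Z) *+ b = (a * b)%N%:Z.
Proof. elim: b => [|b IH]; first by rewrite muln0. rewrite mulrS IH; lia. Qed.

Lemma sum_gdeg : \sum_(c : V) gdeg c = (m * n + n * m)%N%:Z.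
Proof.
rewrite sumV; under eq_bigr do rewrite gdeg_l; under [X in _ + X]eq_bigr do rewrite gdeg_r.
by rewrite !sumr_const !card_ord !Pmuln; lia.
Qed.

Lemma nu_rev pi : injective pi -> forall x, Kc x - nu pi x = nu (fun y => - pi y) x.
Proof.
move=> ipi x; rewrite /Kc /nu gdegE -!sum_ind.
have -> : \sum_c (if adj x c then 1 else 0) =
  \sum_c (if adj x c && (pi c < pi x) then 1 else 0) +
  \sum_c (if [pred y | adj x y && (- pi y < - pi x)] c then 1 else 0) :> int.
  rewrite -big_split; apply: eq_bigr => c _ /=; rewrite ltrN2.
  case Ha: (adj x c) => //=.
  have : pi c != pi x by apply/eqP => /ipi E; move: Ha; rewrite E adj_irr.
  case: (ltgtP (pi c) (pi x)) => //.
rewrite /=; ring.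
Qed.

Lemma deg_nu pi : injective pi -> degree (nu pi) = (m * n)%N%:Z - (m + n)%N%:Z.
Proof.
move=> ipi.
have H1 : \sum_(x : V) Kc x = \sum_(x : V) (nu pi x + nu (fun y => - pi y) x).
  by apply: eq_bigr => x _; rewrite -nu_rev //; lia.
have H2 : degree (nu (fun y => - pi y)) = degree (nu pi).
  rewrite /degree /nu !sumrB; congr (_ - _).
  rewrite -!(eq_bigr _ (fun x _ => sum_ind _)) /=.
  rewrite exchange_big /=; apply: eq_bigr => x _; apply: eq_bigr => y _.
  by rewrite adjC ltrN2.
have H3 : degree (nu pi) + degree (nu (fun y => - pi y)) = \sum_(x : V) Kc x.
  by rewrite H1 big_split.
have H4 : \sum_(x : V) Kc x = (m * n + n * m)%N%:Z - (2 * (m + n))%N%:Z.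
  by rewrite /Kc sumrB sum_gdeg sumr_const card_sum !card_ord Pmuln.
lia.
Qed.


Definition pp (x : int) : int := if 0 <= x then x else 0.
Definition degp (E : cfg) : int := \sum_c pp (E c).

Lemma noneff_le (D : cfg) pi : (forall x, D x <= nu pi x) -> ~ effective D.
Proof.
move=> HD [F [HF [z Hz]]]; apply: (@nu_noneff pi).
exists (fun x => F x + (nu pi x - D x)); split.
  by move=> x; have := HF x; have := HD x; lia.
exists z => c; rewrite -Hz; ring.
Qed.

Definition dom_prop := forall D : cfg, ~ effective D ->
  exists D'' (pi : V -> int), injective pi /\ topp_equiv D D'' /\ forall x, D'' x <= nu pi x.

Definition MC (D : cfg) (k : int) :=
  (exists D' (pi : V -> int), injective pi /\ topp_equiv D D' /\
      degp (fun x => D' x - nu pi x) = k) /\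
  (forall D' (pi : V -> int), injective pi -> topp_equiv D D' ->
      k <= degp (fun x => D' x - nu pi x)).

Lemma cut_lemma (D D' : cfg) pi : topp_equiv D D' ->
  nonneg (fun x => pp (D' x - nu pi x)) /\
  degree (fun x => pp (D' x - nu pi x)) = degp (fun x => D' x - nu pi x) /\
  ~ effective (fun x => D x - pp (D' x - nu pi x)).
Proof.
move=> HD; set E := fun x => pp (D' x - nu pi x); split; [|split] => //.
  by move=> x; rewrite /E /pp; case: ifP.
move=> Heff; apply: (@noneff_le (fun x => D' x - E x) pi).
  by move=> x; rewrite /E /pp; case: ifP => H; lia.
exact: eff_te (te_subf _ HD) Heff.
Qed.

Lemma lift_lemma (Hdom : dom_prop) (D f : cfg) : nonneg f ->
  ~ effective (fun x => D x - f x) ->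
  exists D' (pi : V -> int), injective pi /\ topp_equiv D D' /\
      degp (fun x => D' x - nu pi x) <= degree f.
Proof.
move=> Hf Hne; have [D'' [pi [ipi [HD Hle]]]] := Hdom _ Hne.
exists (fun x => D'' x + f x), pi; split => //; split.
  have := te_addf f HD.
  by have -> : (fun c => D c - f c + f c) = D by apply: functional_extensionality => c; ring.
apply: ler_sum => x _; rewrite /pp; have := Hle x; have := Hf x; case: ifP; lia.
Qed.

Lemma HR_MC (Hdom : dom_prop) D r : has_rank D r -> MC D (r + 1).
Proof.
move=> [[f [Hf [Hdf Hne]]] Hall].
have Hge : forall D' (pi : V -> int), injective pi -> topp_equiv D D' ->
      r + 1 <= degp (fun x => D' x - nu pi x).
  move=> D' pi ipi HD; have [HE [HdE HneE]] := cut_lemma pi HD.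
  rewrite leNgt; apply/negP => Hlt; apply: HneE; apply: Hall; first exact: HE.
  by rewrite HdE.
split => //.
have [D' [pi [ipi [HD Hle]]]] := lift_lemma Hdom Hf Hne.
exists D', pi; split => //; split => //.
by apply/eqP; rewrite eq_le Hge // andbT -Hdf.
Qed.

Lemma MC_HR (Hdom : dom_prop) D k : MC D k -> has_rank D (k - 1).
Proof.
move=> [[D' [pi [ipi [HD Hk]]]] Hall]; split.
  have [HE [HdE HneE]] := cut_lemma pi HD.
  by eexists; split; [exact: HE|split; [rewrite HdE Hk; ring|exact: HneE]].
move=> f Hf Hdf; apply: NNPP => Hne.
have [D'' [pi' [ipi' [HD' Hle]]]] := lift_lemma Hdom Hf Hne.
have := Hall _ _ ipi' HD'; lia.
Qed.

Lemma degp_opp (E : cfg) : degp (fun x => - E x) = degp E - degree E.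
Proof.
rewrite /degp /degree -sumrB; apply: eq_bigr => x _; rewrite /pp.
by case: ifP; case: ifP; lia.
Qed.

Lemma deg_diff (D E : cfg) : degree (fun x => D x - E x) = degree D - degree E.
Proof. by rewrite /degree sumrB. Qed.

Lemma Kc_inv (D : cfg) : (fun x => Kc x - (Kc x - D x)) = D.
Proof. by apply: functional_extensionality => x; ring. Qed.

Lemma MC_K D k : MC D k ->
  MC (fun x => Kc x - D x) (k - degree D + ((m * n)%N%:Z - (m + n)%N%:Z)).
Proof.
move=> [[D' [pi [ipi [HD Hk]]]] Hall].
have inj_opp : forall pi0 : V -> int, injective pi0 -> injective (fun y => - pi0 y).
  by move=> pi0 ip0 x y /oppr_inj /ip0.
split.
  exists (fun x => Kc x - D' x), (fun y => - pi y); split; first exact: inj_opp.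
  split; first exact: te_Kc.
  have -> : (fun x => Kc x - D' x - nu (fun y => - pi y) x) = (fun x => - (D' x - nu pi x)).
    by apply: functional_extensionality => x; rewrite -nu_rev //; ring.
  rewrite degp_opp Hk deg_diff deg_nu // (te_deg HD); ring.
move=> D'' pi' ipi' HD''.
have HD2 : topp_equiv D (fun x => Kc x - D'' x).
  by have := te_Kc HD''; rewrite Kc_inv.
have := Hall _ _ (inj_opp _ ipi') HD2.
have -> : (fun x => D'' x - nu pi' x) =
   (fun x => - ((Kc x - D'' x) - nu (fun y => - pi' y) x)).
  by apply: functional_extensionality => x; rewrite -nu_rev //; ring.
have Hd2 := te_deg HD2; rewrite degp_opp deg_diff deg_nu; last exact: inj_opp.
lia.
Qed.


Definition ind (C : {set V}) : V -> int := fun x => if x \in C then 1 else 0.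

Lemma DeltaSetE (C : {set V}) c' :
  DeltaSet C c' = \sum_c (if adj c' c then ind C c' - ind C c else 0).
Proof.
rewrite -LapE /DeltaSet /Lap big_mkcond /=; apply: eq_bigr => c _.
by rewrite /ind; case: ifP; rewrite ?mul1r ?mul0r.
Qed.

Lemma DeltaSet_in (C : {set V}) c : c \in C ->
  DeltaSet C c = (#|[pred y | adj c y && (y \notin C)]|)%:Z.
Proof.
move=> Hc; rewrite DeltaSetE -sum_ind; apply: eq_bigr => y _ /=.
by rewrite /ind Hc; case: adj => //=; case: (y \in C).
Qed.

Lemma DeltaSet_out (C : {set V}) c : c \notin C -> DeltaSet C c <= 0.
Proof.
move=> Hc; rewrite DeltaSetE; apply: sumr_le0 => y _.
by rewrite /ind (negbTE Hc); case: adj => //; case: (y \in C).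
Qed.

Definition cnt (s : seq V) x := #|[pred y | adj x y && (index y s < index x s)%N]|.

Definition burn_inv (w : cfg) (s : seq V) :=
  [/\ uniq s, head q0 s = q0, q0 \in s &
      forall x, x \in s -> x != q0 -> w x < (cnt s x)%:Z].

Lemma burn_step (w : cfg) s : parking w -> burn_inv w s -> (size s < #|V|)%N ->
  exists c, c \notin s /\ burn_inv w (rcons s c).
Proof.
move=> [Hw0 Hw] [us hs qs Hs] Hsz.
set C := [set x | x \notin s].
have C0 : C != set0.
  apply/negP => /eqP HC.
  have : (#|V| <= size s)%N.
    rewrite -(card_uniqP us); apply: subset_leq_card; apply/subsetP => x _.
    apply: contraT => xs; have : x \in C by rewrite inE.
    by rewrite HC inE.
  by rewrite leqNgt Hsz.
have Cns : forall c, c \in C -> ~~ is_sink c.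
  by move=> c; rewrite inE is_sinkE; apply: contra => /eqP ->.
have [c [cns Hc]] := Hw C C0 Cns.
have cC : c \in C.
  apply: contraLR Hc => /DeltaSet_out H; rewrite -leNgt; have := Hw0 c cns; lia.
have cs : c \notin s by rewrite inE in cC.
exists c; split => //.
have idx_old : forall y, y \in s -> index y (rcons s c) = index y s.
  by move=> y ys; rewrite -cats1 index_cat ys.
have idx_c : index c (rcons s c) = size s.
  by rewrite -cats1 index_cat (negbTE cs) /= eqxx addn0.
have idx_new : forall y, y \notin s -> (size s <= index y (rcons s c))%N.
  by move=> y ys; rewrite -cats1 index_cat (negbTE ys) leq_addr.
split.
- by rewrite rcons_uniq cs.
- by case: (s) hs qs => //.
- by rewrite mem_rcons inE qs orbT.
move=> x; rewrite mem_rcons inE => /orP [/eqP -> | xs] xq.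
- rewrite /cnt idx_c; rewrite DeltaSet_in // in Hc.
  have E : [pred y | adj c y && (index y (rcons s c) < size s)%N] =i
            [pred y | adj c y && (y \notin C)].
    move=> y /=; rewrite !inE negbK; case: (boolP (y \in s)) => ys.
      by rewrite idx_old // index_mem ys.
    by rewrite ltnNge idx_new.
  by rewrite (eq_card E); move: Hc; rewrite subr_lt0.
- rewrite /cnt idx_old //.
  have E : [pred y | adj x y && (index y (rcons s c) < index x s)%N] =i
            [pred y | adj x y && (index y s < index x s)%N].
    move=> y /=; rewrite !inE; case: (boolP (y \in s)) => ys; first by rewrite idx_old.
    have : (index x s < size s)%N by rewrite index_mem.
    have := idx_new y ys; rewrite (memNindex ys).
    by move=> h1 h2; rewrite !ltnNge (leq_trans (ltnW h2) h1) (ltnW h2).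
  by rewrite (eq_card E); apply: Hs.
Qed.


Lemma burn_full (w : cfg) : parking w ->
  exists pi : V -> int, injective pi /\ (forall x, x != q0 -> w x <= nu pi x) /\ nu pi q0 = -1.
Proof.
move=> Hp.
have Hind : forall k s, burn_inv w s -> (#|V| - size s)%N = k ->
    exists s', burn_inv w s' /\ size s' = #|V|.
  elim=> [|k IH] s Hs Hk.
    exists s; split => //; case: Hs => us _ _ _; apply/eqP; rewrite eqn_leq.
    by rewrite -(card_uniqP us) max_card /= (card_uniqP us) -subn_eq0; apply/eqP; exact: Hk.
  have Hsz : (size s < #|V|)%N by rewrite -subn_gt0 Hk.
  have [c [cs Hc]] := burn_step Hp Hs Hsz.
  apply: (IH _ Hc); rewrite size_rcons; lia.
have H0 : burn_inv w [:: q0].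
  by split; [by []|by []|by rewrite inE|move=> x; rewrite inE => /eqP ->; rewrite eqxx].
have [s [[us hs qs Hs] Hsz]] := Hind _ _ H0 (erefl _).
have alls : forall x, x \in s.
  move=> x; apply: contraT => xs.
  have : uniq (x :: s) by rewrite /= xs us.
  move/card_uniqP => /= E; have := max_card (mem (x :: s)); rewrite E Hsz; lia.
exists (fun x => (index x s)%:Z); split; [|split].
- by move=> x y /= /eqP; rewrite eqz_nat => /eqP /(index_inj q0 (alls x) (alls y)).
- move=> x xq; have := Hs x (alls x) xq; rewrite /nu /cnt.
  have E : [pred y | adj x y && ((index y s)%:Z < (index x s)%:Z)] =i
           [pred y | adj x y && (index y s < index x s)%N].
    by move=> y; rewrite !inE ltz_nat.
  rewrite (eq_card E); lia.
- rewrite /nu; have idx0 : index q0 s = 0%N.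
    by case: (s) hs => [|a t] //= ->; rewrite eqxx.
  rewrite (eq_card (B := pred0)) ?card0 // => y; rewrite !inE idx0 ltz_nat ltn0.
  by rewrite andbF.
Qed.


Lemma park_half (a b : cfg) (z : V -> int) : parking a ->
  (forall c, ~~ is_sink c -> 0 <= b c) -> (forall c, a c - b c = Lap z c) ->
  forall x, z x <= z q0.
Proof.
move=> [Ha0 Ha] Hb Hz v; rewrite leNgt; apply/negP => Hv.
have [vm _ Hvm] := @ex_maxP V predT z q0 isT.
set S := [set x | z x == z vm].
have S0 : S != set0 by apply/set0Pn; exists vm; rewrite inE.
have Sns : forall c, c \in S -> ~~ is_sink c.
  move=> c; rewrite inE is_sinkE => /eqP Hc; apply/eqP => E; subst c.
  have := Hvm v isT; lia.
have [c [cns Hc]] := Ha S S0 Sns.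
case: (boolP (c \in S)) => cS.
- have HL : DeltaSet S c <= Lap z c.
    rewrite DeltaSet_in // -sum_ind LapE; apply: ler_sum => y _ /=.
    move: cS; rewrite inE => /eqP Hcm.
    have Hy := Hvm y isT.
    case: adj => //=; case: (boolP (y \in S)) => yS /=.
      lia.
    move: yS; rewrite inE => Hne; lia.
  have := Hz c; have := Hb c cns; lia.
- have := DeltaSet_out cS; have := Ha0 c cns; lia.
Qed.

Lemma Lap_const (z : V -> int) c : (forall x, z x = z q0) -> Lap z c = 0.
Proof.
move=> Hz; rewrite LapE big1 // => y _; rewrite (Hz y) (Hz c) subrr; by case: adj.
Qed.

Lemma park_unique (a b : cfg) : parking a -> parking b -> topp_equiv a b -> a = b.
Proof.
move=> Pa Pb [z Hz].
have H1 := park_half Pa (proj1 Pb) Hz.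
have Hz' : forall c, b c - a c = Lap (fun x => - z x) c.
  by move=> c; rewrite Lap_opp /Lap -Hz opprB.
have H2 := park_half Pb (proj1 Pa) Hz'.
have Hc : forall x, z x = z q0 by move=> x; have := H1 x; have := H2 x; lia.
apply: functional_extensionality => c; have := Hz c; rewrite -/(Lap z c) Lap_const //.
by move/eqP; rewrite subr_eq0 => /eqP.
Qed.


Hypothesis hn : (0 < n)%N.

Definition nonneg_off (w : cfg) := forall c, ~~ is_sink c -> 0 <= w c.
Definition N1 (w : cfg) := \sum_(x | x != q0) w x.
Definition isA (x : V) := if x is inl i then (i : nat) != m.-1 else false.
Definition N2 (w : cfg) := \sum_(x | isA x) w x.

Lemma N1_ge0 w : nonneg_off w -> 0 <= N1 w.
Proof. by move=> H; apply: sumr_ge0 => x xq; apply: H; rewrite is_sinkE. Qed.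

Lemma isA_ns x : isA x -> ~~ is_sink x.
Proof. by case: x. Qed.

Lemma N2_ge0 w : nonneg_off w -> 0 <= N2 w.
Proof. by move=> H; apply: sumr_ge0 => x xA; apply: H; apply: isA_ns. Qed.

Lemma deg_N1 w : degree w = w q0 + N1 w.
Proof. by rewrite /degree (bigD1 q0). Qed.

Lemma DeltaSet_Lap (C : {set V}) c : DeltaSet C c = Lap (ind C) c.
Proof. by rewrite DeltaSetE LapE. Qed.

Lemma ind_ge0 (C : {set V}) x : 0 <= ind C x.
Proof. by rewrite /ind; case: ifP. Qed.

Lemma fire_step w : nonneg_off w -> ~ parking w ->
  exists w', nonneg_off w' /\ topp_equiv w w' /\
    (N1 w' < N1 w \/ (N1 w' = N1 w /\ N2 w' < N2 w)).
Proof.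
move=> Hw Hnp.
have [C [C0 [Cns Hall]]] : exists C : {set V}, C != set0 /\ (forall c, c \in C -> ~~ is_sink c) /\
    forall c, ~~ is_sink c -> 0 <= w c - DeltaSet C c.
  apply: NNPP => Hne; apply: Hnp; split => // C C0 Cns; apply: NNPP => Hc.
  apply: Hne; exists C; split => //; split => // c cns; rewrite leNgt; apply/negP => Hlt.
  by apply: Hc; exists c.
set w' := fun c => w c - DeltaSet C c.
have Hte : topp_equiv w w'.
  by exists (ind C) => c; rewrite /w' opprB addrC subrK DeltaSet_Lap.
exists w'; split => //; split => //.
have qC : q0 \notin C by apply/negP => /Cns; rewrite is_sinkE eqxx.
have HN1 : N1 w' = N1 w + DeltaSet C q0.
  have := te_deg Hte; rewrite !deg_N1 /w'; lia.
case: (boolP [exists j, inr j \in C]) => [/existsP [j jC]|noB].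
- left; rewrite HN1.
  suff : DeltaSet C q0 <= -1 by lia.
  rewrite DeltaSetE (bigD1 (inr j)) //= /ind (negbTE qC) jC.
  rewrite -[-1]addr0 lerD // ?sub0r //; apply: sumr_le0 => y _.
  by case: y => [i|j2] //=; rewrite ?(negbTE qC) sub0r oppr_le0; case: ifP.
- have nB : forall j, inr j \notin C by move=> j; apply: contra noB => H; apply/existsP; exists j.
  have HD0 : DeltaSet C q0 = 0.
    rewrite DeltaSetE big1 // => y _; case: y => [i|j] //=.
    by rewrite /ind (negbTE qC) (negbTE (nB j)) subrr.
  right; split; first by rewrite HN1 HD0 addr0.
  have HDA : forall i, 0 <= DeltaSet C (inl i).
    move=> i; rewrite DeltaSetE; apply: sumr_ge0 => y _; case: y => [i'|j] //=.
    by rewrite /ind (negbTE (nB j)) subr0; case: ifP.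
  have [c cC] := set0Pn _ C0.
  have cA : isA c.
    case: c cC => [i|j] cC; last by rewrite (negbTE (nB j)) in cC.
    by have := Cns _ cC.
  case: c cC cA => [i|j] cC cA; last by rewrite (negbTE (nB j)) in cC.
  have Hc1 : 1 <= DeltaSet C (inl i).
    rewrite DeltaSetE (bigD1 (inr (Ordinal hn))) //= /ind cC (negbTE (nB _)) subr0.
    rewrite lerDl; apply: sumr_ge0 => y _; case: y => [i'|j] //=.
    by rewrite (negbTE (nB j)) subr0.
  have HS : 1 <= \sum_(x | isA x) DeltaSet C x.
    rewrite (bigD1 (inl i)) //=; apply: (le_trans Hc1); rewrite lerDl.
    by apply: sumr_ge0 => x /andP [xA _]; case: x xA => [i'|j] //= _.
  rewrite /N2 /w' sumrB ltrBlDl ltrDr; exact: lt_le_trans HS.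
Qed.


Lemma park_nn_aux (k1 : nat) : forall w, nonneg_off w -> N1 w < k1%:Z ->
  exists w', parking w' /\ topp_equiv w w'.
Proof.
elim: k1 => [|k1 IH1] w Hw H1.
  by have := N1_ge0 Hw; lia.
have H : forall k2 : nat, forall w, nonneg_off w -> N1 w <= k1%:Z -> N2 w < k2%:Z ->
    exists w', parking w' /\ topp_equiv w w'.
  elim=> [|k2 IH2] w0 Hw0 H10 H20; first by have := N2_ge0 Hw0; lia.
  case: (classic (parking w0)) => Hp; first by exists w0; split => //; exact: te_refl.
  have [w1 [Hw1 [Hte [Hlt|[Heq Hlt]]]]] := fire_step Hw0 Hp.
  - have [w2 [Hp2 Hte2]] := IH1 w1 Hw1 ltac:(lia).
    by exists w2; split => //; exact: te_trans Hte Hte2.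
  - have [w2 [Hp2 Hte2]] := IH2 w1 Hw1 ltac:(lia) ltac:(lia).
    by exists w2; split => //; exact: te_trans Hte Hte2.
have H2 := N2_ge0 Hw.
apply: (H (absz (N2 w)).+1) => //; lia.
Qed.

Lemma exists_nn (u : cfg) : exists w, nonneg_off w /\ topp_equiv u w.
Proof.
set K := \sum_c `|u c|.
have HK : forall c, - K <= u c.
  move=> c; have : `|u c| <= K.
    by rewrite /K (bigD1 c) //= lerDl sumr_ge0 // => x _; rewrite normr_ge0.
  have := ler_norm (- u c); rewrite normrN; lia.
have K0 : 0 <= K by rewrite sumr_ge0 // => x _; rewrite normr_ge0.
set L := (m%:Z + 1) * K.
set z : V -> int := fun x => match x with inl i => if (i : nat) == m.-1 then L else 0 | inr _ => K end.
exists (fun c => u c - Lap z c); split; last by exists z => c; ring.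
case=> [i|j] ns; rewrite LapE sumV /=.
- rewrite big1 // add0r /=.
  have : (i : nat) != m.-1 by [].
  move/negbTE => ->; rewrite sumr_const card_ord.
  have := HK (inl i); have : (0 - K) *+ n <= - K.
    rewrite sub0r mulNrn lerN2; case: (n) hn => // n' _.
    by rewrite mulrS lerDl mulrn_wge0.
  by move=> h1 h2; rewrite subr_ge0; exact: le_trans h1 h2.
- rewrite big1_eq addr0 sumrB sumr_const card_ord.
  rewrite [X in _ - (_ - X)](bigD1 (Ordinal sinkP)) //= eqxx big1 ?addr0; last first.
    move=> i0 Hi0; case: ifP => // /eqP E; move: Hi0; apply: contraNeq => _; apply/eqP/val_inj.
    exact: E.
  rewrite -mulr_natr natz.
  have -> : u (inr j) - (K * m%:Z - L) = u (inr j) + K by rewrite /L; ring.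
  have := HK (inr j); lia.
Qed.

Lemma exists_park (u : cfg) : exists w, parking w /\ topp_equiv u w.
Proof.
have [w [Hw Hte]] := exists_nn u.
have [w' [Hp Hte']] := park_nn_aux (k1 := (absz (N1 w)).+1) Hw ltac:(have := N1_ge0 Hw; lia).
by exists w'; split => //; exact: te_trans Hte Hte'.
Qed.

Lemma dom_ok : dom_prop.
Proof.
move=> D Hne; have [w [Hp Hte]] := exists_park D.
have [pi [ipi [Hle Hq]]] := burn_full Hp.
exists w, pi; split => //; split => // x.
case: (boolP (x == q0)) => [/eqP ->|xq]; last exact: Hle.
rewrite Hq; apply: NNPP => H; apply: Hne.
exists w; split; last by [].
move=> c; case: (boolP (c == q0)) => [/eqP ->|cq]; first lia.
by apply: (proj1 Hp); rewrite is_sinkE.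
Qed.

End Basics.

Section Aut.
Variables m n : nat.
Hypothesis hm : (0 < m)%N.
Hypothesis hn : (0 < n)%N.
Local Notation V := (vert m n).
Local Notation cfg := (config m n).

Definition aut (s : V -> V) := [/\ bijective s, (forall x y, adj (s x) (s y) = adj x y),
  (forall x, gdeg (s x) = gdeg x) & (forall x, is_sink (s x) = is_sink x)].

Lemma aut_inv s : aut s -> exists t, [/\ aut t, cancel s t & cancel t s].
Proof.
case=> [[t st ts] Ha Hg Hs]; exists t; split => //; split.
- by exists s.
- by move=> x y; rewrite -Ha !ts.
- by move=> x; rewrite -Hg ts.
- by move=> x; rewrite -Hs ts.
Qed.

Lemma Delta_aut s : aut s -> forall c c', Delta (s c) (s c') = Delta c c'.
Proof.
case=> [[t st ts] Ha Hg _] c c'; rewrite /Delta Ha Hg.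
by rewrite (inj_eq (can_inj st)).
Qed.

Lemma te_aut s (u v : cfg) : aut s -> topp_equiv u v ->
  topp_equiv (fun x => u (s x)) (fun x => v (s x)).
Proof.
move=> As [z Hz]; exists (fun x => z (s x)) => c'; rewrite Hz.
case: (As) => [[t st ts] _ _ _].
rewrite (reindex_inj (can_inj st)) /=; apply: eq_bigr => c _.
by rewrite Delta_aut.
Qed.

Lemma eff_aut s (u : cfg) : aut s -> effective u -> effective (fun x => u (s x)).
Proof.
move=> As [w [Hw Huw]]; exists (fun x => w (s x)); split; first by move=> x; apply: Hw.
exact: te_aut.
Qed.

Lemma deg_aut s (u : cfg) : aut s -> degree (fun x => u (s x)) = degree u.
Proof.
case=> [[t st ts] _ _ _]; rewrite /degree.
by rewrite [in RHS](reindex_inj (can_inj st)).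
Qed.

Lemma rank_aut s (u : cfg) r : aut s -> has_rank u r -> has_rank (fun x => u (s x)) r.
Proof.
move=> As; have [t [At st ts]] := aut_inv As.
move=> [[f [Hf [Hdf Hne]]] Hall]; split.
  exists (fun x => f (s x)); split; first by move=> x; apply: Hf.
  split; first by rewrite deg_aut.
  move=> He; apply: Hne; have := eff_aut At He => /=.
  by apply: eff_ext => x; rewrite ts.
move=> f0 Hf0 Hdf0.
have := Hall (fun x => f0 (t x)) (fun x => Hf0 (t x)) ltac:(by rewrite deg_aut).
move/(eff_aut As); apply: eff_ext => x /=; by rewrite st.
Qed.

Lemma rank_te (u v : cfg) r : has_rank u r -> topp_equiv u v -> has_rank v r.
Proof.
move=> [[f [Hf [Hdf Hne]]] Hall] Huv; split.
  exists f; split => //; split => // He; apply: Hne.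
  exact: eff_te (te_sym (te_subf f Huv)) He.
move=> f0 Hf0 Hdf0; exact: eff_te (te_subf f0 Huv) (Hall f0 Hf0 Hdf0).
Qed.

Lemma park_aut s (u : cfg) : aut s -> parking u -> parking (fun x => u (s x)).
Proof.
move=> As; have [t [At st ts]] := aut_inv As.
case: (As) => [_ Ha Hg Hs].
move=> [Hu0 Hu]; split; first by move=> c cns; apply: Hu0; rewrite Hs.
move=> C C0 Cns.
have sinj : injective s := can_inj st.
have HC' : [set s x | x in C] != set0.
  have [c cC] := set0Pn _ C0; apply/set0Pn; exists (s c); exact: imset_f.
have Cns' : forall c, c \in [set s x | x in C] -> ~~ is_sink c.
  by move=> c /imsetP [x xC ->]; rewrite Hs; apply: Cns.
have [c0 [c0ns Hc0]] := Hu _ HC' Cns'.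
exists (t c0); split; first by rewrite -Hs ts.
suff : DeltaSet C (t c0) = DeltaSet [set s x | x in C] c0 by move=> ->; rewrite ts.
rewrite !DeltaSetE [in RHS](reindex_inj sinj) /=; apply: eq_bigr => y _.
have E := ts c0; move: E; set c := t c0 => E; rewrite -E Ha /ind !mem_imset //.
Qed.

Lemma Kc_aut s x : aut s -> Kc (s x) = Kc x.
Proof. by case=> _ _ Hg _; rewrite /Kc Hg. Qed.

Definition vact (a : {perm 'I_m}) (b : {perm 'I_n}) : V -> V :=
  fun x => match x with inl i => inl (a i) | inr j => inr (b j) end.

Lemma sink_eq (k : 'I_m) : ((k : nat) == m.-1) = ~~ (k < m.-1)%N.
Proof.
have h := ltn_ord k.
have h' : (k <= m.-1)%N by rewrite -ltnS prednK.
by rewrite -leqNgt eqn_leq h'.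
Qed.

Lemma act_aut (a : {perm 'I_m}) (b : {perm 'I_n}) : okp m.-1 a -> aut (vact a b).
Proof.
move=> oka; split.
- exists (vact a^-1 b^-1) => [[i|j]|[i|j]] /=; by rewrite ?permK ?permKV.
- by case=> [i|j] [i'|j'].
- by case=> [i|j] /=; rewrite ?gdeg_l ?gdeg_r.
- by case=> [i|j] //=; rewrite !sink_eq oka.
Qed.

Lemma act_comp (a a' : {perm 'I_m}) (b b' : {perm 'I_n}) x : vact a b (vact a' b' x) = vact (a' * a)%g (b' * b)%g x.
Proof. by case: x => [i|j] /=; rewrite permM. Qed.

Lemma okp_comp (a a' : {perm 'I_m}) : okp m.-1 a -> okp m.-1 a' -> okp m.-1 (a' * a)%g.
Proof. by move=> h h' i; rewrite permM h h'. Qed.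

Lemma sort_conf_ex (w : cfg) : exists p : {perm 'I_m} * {perm 'I_n},
  okp m.-1 p.1 /\ sorted_conf (fun x => w (vact p.1 p.2 x)).
Proof.
have [a [oka sa]] := srt_ex m.-1 (fun i => w (inl i)).
have [b [okb sb]] := srt_ex n (fun j => w (inr j)).
exists (a, b); split => //; split => /=.
  by move=> i i' h1 h2; apply: sa.
by move=> j j' h; apply: sb => //.
Qed.

Lemma sort_conf_uniq (u : cfg) (a : {perm 'I_m}) (b : {perm 'I_n}) : okp m.-1 a -> sorted_conf u ->
  sorted_conf (fun x => u (vact a b x)) -> (fun x => u (vact a b x)) = u.
Proof.
move=> oka [su1 su2] [sa1 sa2]; apply: functional_extensionality => [[i|j]] /=.
- case: (ltnP i m.-1) => hi.
    exact: (srt_uniq (x := fun i => u (inl i)) oka su1 sa1 hi).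
  have : ~~ (a i < m.-1)%N by rewrite oka -leqNgt.
  rewrite -sink_eq => /eqP E.
  have : ~~ (i < m.-1)%N by rewrite -leqNgt.
  rewrite -sink_eq => /eqP E'.
  by congr (u (inl _)); apply: val_inj; rewrite /= E E'.
- have okb : okp n b by move=> j0; rewrite !ltn_ord.
  have h1 : srt n (fun j => u (inr j)) by move=> j1 j2 h _; apply: su2.
  have h2 : srt n (fun j => u (inr (b j))) by move=> j1 j2 h _; apply: sa2.
  exact: (srt_uniq okb h1 h2 (ltn_ord j)).
Qed.

End Aut.

Section Final.
Variables m n : nat.
Hypothesis hm : (0 < m)%N.
Hypothesis hn : (0 < n)%N.
Local Notation V := (vert m n).
Local Notation cfg := (config m n).

Definition red (u : cfg) : cfg :=
  proj1_sig (constructive_indefinite_description _ (exists_park hm hn u)).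

Lemma red_spec u : parking (red u) /\ topp_equiv u (red u).
Proof. exact: (proj2_sig (constructive_indefinite_description _ (exists_park hm hn u))). Qed.

Definition sortp (w : cfg) : {perm 'I_m} * {perm 'I_n} :=
  proj1_sig (constructive_indefinite_description _ (sort_conf_ex w)).

Lemma sortp_spec w : okp m.-1 (sortp w).1 /\
  sorted_conf (fun x => w (vact (sortp w).1 (sortp w).2 x)).
Proof. exact: (proj2_sig (constructive_indefinite_description _ (sort_conf_ex w))). Qed.

Definition sortc (w : cfg) : cfg := fun x => w (vact (sortp w).1 (sortp w).2 x).

Definition Phi (u : cfg) : cfg := sortc (red (fun x => Kc x - u x)).

Lemma deg_Kc : degree (@Kc m n) = (m * n + n * m)%N%:Z - (2 * (m + n))%N%:Z.
Proof. by rewrite /degree /Kc sumrB sum_gdeg // sumr_const card_sum !card_ord (Pmuln hm). Qed.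

Lemma g_eq : ((m.-1 * n.-1)%N)%:Z = (m * n)%N%:Z - (m + n)%N%:Z + 1.
Proof.
case: m hm => // m' _; case: n hn => // n' _ /=.
rewrite !PoszM !PoszD; lia.
Qed.

Lemma PhiP (i j : int) u : parking_sorted_with i j u -> parking_sorted_with j i (Phi u).
Proof.
move=> [Hp [Hs [r [Hr [Hi Hj]]]]].
have Hmc := MC_K hm (HR_MC hm (dom_ok hm hn) Hr).
have Hr' := MC_HR hm (dom_ok hm hn) Hmc.
set v := fun x => Kc x - u x.
have [Hpw Htw] := red_spec v.
have Hrw := rank_te Hr' Htw.
have [oka Hsrt] := sortp_spec (red v).
have Aut := act_aut hm (sortp (red v)).2 oka.
split; first exact: park_aut Aut Hpw.
split; first exact: Hsrt.
eexists; split; first exact: rank_aut Aut Hrw.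
have Hd : degree (Phi u) = degree (@Kc m n) - degree u.
  rewrite /Phi /sortc deg_aut // -(te_deg Htw) /v /degree sumrB //.
rewrite Hd deg_Kc (mulnC n m); move: Hi; rewrite g_eq => Hi.
split; lia.
Qed.

Lemma PhiK (i j : int) u : parking_sorted_with i j u -> Phi (Phi u) = u.
Proof.
move=> [Hp [Hs _]].
set v := fun x => Kc x - u x.
have [Hpw Htw] := red_spec v.
have [oka Hsrt] := sortp_spec (red v).
set a := (sortp (red v)).1; set b := (sortp (red v)).2.
have Aut := act_aut hm b oka.
have E1 : (fun x => Kc x - Phi u x) = (fun x => (fun y => Kc y - red v y) (vact a b x)).
  by apply: functional_extensionality => x /=; rewrite Kc_aut.
have Hte : topp_equiv (fun x => Kc x - Phi u x) (fun x => u (vact a b x)).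
  rewrite E1; apply: (te_aut (u:=fun y => Kc y - red v y) (v:=u) Aut).
  have := te_Kc Htw; rewrite Kc_inv => H; exact: te_sym H.
have Hpu : parking (fun x => u (vact a b x)) by exact: park_aut.
have [Hpr Htr] := red_spec (fun x => Kc x - Phi u x).
have Er : red (fun x => Kc x - Phi u x) = (fun x => u (vact a b x)).
  apply: (park_unique hm Hpr Hpu).
  exact: te_trans (te_sym Htr) Hte.
rewrite /Phi Er.
have [oka' Hsrt'] := sortp_spec (fun x => u (vact a b x)).
rewrite /sortc.
set a' := (sortp _).1; set b' := (sortp _).2.
have -> : (fun x => u (vact a b (vact a' b' x))) = (fun x => u (vact (a' * a)%g (b' * b)%g x)).
  by apply: functional_extensionality => x; rewrite act_comp.
apply: sort_conf_uniq => //; first exact: okp_comp.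
have := Hsrt'; rewrite -/a' -/b'.
suff -> : (fun x => u (vact a b (vact a' b' x))) = (fun x => u (vact (a' * a)%g (b' * b)%g x)) by [].
by apply: functional_extensionality => x; rewrite act_comp.
Qed.

End Final.

Theorem theorem14p1 (m n : nat) (hm : (0 < m)%N) (hn : (0 < n)%N) (i j : int) :
  exists f : {u : config m n | parking_sorted_with i j u} ->
             {u : config m n | parking_sorted_with j i u},
    bijective f.
Proof.
pose f := fun x : {u : config m n | parking_sorted_with i j u} =>
  exist _ (Phi hm hn (proj1_sig x)) (PhiP hm hn (proj2_sig x)) :
  {u : config m n | parking_sorted_with j i u}.
pose g := fun x : {u : config m n | parking_sorted_with j i u} =>
  exist _ (Phi hm hn (proj1_sig x)) (PhiP hm hn (proj2_sig x)) :
  {u : config m n | parking_sorted_with i j u}.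
exists f, g.
- case=> u pu; apply: eq_sig => /=; [exact: PhiK pu | move=> ?; apply: proof_irrelevance].
- case=> u pu; apply: eq_sig => /=; [exact: PhiK pu | move=> ?; apply: proof_irrelevance].
Qed.
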